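(* Let $2\le r_1<r_2$ be integers and let $T=[h,q_1,q_2]\in\mathfrak{F}(n)$. For an integer $j\ge 3$, let $T_j$ be the starlike tree consisting of a central vertex to which $r_2$ pendant paths with $2$ edges each and one pendant path with $j$ edges are attached. Then $\rho(T)>\rho(T_j)$.
   Context: $\rho(G)$ denotes the spectral radius (largest eigenvalue of the adjacency matrix) of a graph $G$. For integers $h,q_1,q_2\ge 2$ and fixed integers $2\le r_1<r_2$, the tree $[h,q_1,q_2]$ is constructed as follows: take a vertex $u$; attach to $u$ a pendant path with $h$ edges; attach to $u$ a path with $q_1$ edges ending at a vertex $v_1$, and attach to $v_1$ exactly $r_1$ pendant paths with $2$ edges each; attach to $u$ a path with $q_2$ edges ending at a vertex $v_2$, and attach to $v_2$ exactly $r_2$ pendant paths with $2$ edges each. It has $n=1+h+q_1+q_2+2(r_1+r_2)$ vertices. $\mathfrak{F}(n)$ is the set of all such trees $[h,q_1,q_2]$ with $h,q_1,q_2\ge2$ and $h+q_1+q_2=n-1-2(r_1+r_2)$ (for the fixed $r_1,r_2$). *)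

(* Defs.v *)
From HB Require Import structures.
From mathcomp Require Import all_boot all_order all_algebra.
From mathcomp Require Import reals classical_sets.
Set Implicit Arguments. Unset Strict Implicit. Unset Printing Implicit Defensive.
Import Order.TTheory GRing.Theory Num.Theory.
Local Open Scope ring_scope.

(* Vertices of a graph on n vertices are 0, ..., n-1; a graph is given by a
   list of (undirected) edges as pairs of naturals. *)

(* pend s o l : a path with l edges attached at vertex s, whose new vertices
   are o, o+1, ..., o+l-1 (in order going away from s). *)
Definition pend (s o l : nat) : seq (nat * nat) :=
  [seq ((if k == 0 then s else o + k.-1)%N, (o + k)%N) | k <- iota 0 l].

Definition adjmx (R : realType) (n : nat) (E : seq (nat * nat)) : 'M[R]_n :=
  \matrix_(i < n, j < n)
     (((nat_of_ord i, nat_of_ord j) \in E) || ((nat_of_ord j, nat_of_ord i) \in E))%:R.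

(* Spectral radius = largest eigenvalue of the adjacency matrix
   (for a symmetric real matrix, the eigenvalues are real and finitely many,
   so the supremum is the maximum). *)
Definition spectral_radius (R : realType) (n : nat) (A : 'M[R]_n) : R :=
  sup [set x : R | eigenvalue A x].

(* Vertex 0 is u.
   Vertices 1..h : pendant path of length h at u.
   Vertices h+1..h+q1 : path of length q1 from u, ending at v1 = h+q1.
   Then r1 pendant P_2's at v1, then path of length q2 from u ending at
   v2 = h+q1+2 r1+q2, then r2 pendant P_2's at v2. *)
Definition treeF_edges (r1 r2 h q1 q2 : nat) : seq (nat * nat) :=
  let v1 := (h + q1)%N in
  let o2 := (1 + h + q1 + 2 * r1)%N in
  let v2 := (h + q1 + 2 * r1 + q2)%N in
  pend 0 1 h
  ++ pend 0 (1 + h) q1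
  ++ flatten [seq pend v1 (1 + h + q1 + 2 * k) 2 | k <- iota 0 r1]
  ++ pend 0 o2 q2
  ++ flatten [seq pend v2 (1 + v2 + 2 * k) 2 | k <- iota 0 r2].

Definition treeF_order (r1 r2 h q1 q2 : nat) : nat :=
  (1 + h + q1 + q2 + 2 * (r1 + r2))%N.

Definition starT_edges (r2 j : nat) : seq (nat * nat) :=
  flatten [seq pend 0 (1 + 2 * k) 2 | k <- iota 0 r2] ++ pend 0 (1 + 2 * r2) j.

Definition starT_order (r2 j : nat) : nat := (1 + 2 * r2 + j)%N.

(* Main.v *)
Require Import Defs.
From HB Require Import structures.
From mathcomp Require Import all_boot all_order all_algebra.
From mathcomp Require Import reals classical_sets.
From mathcomp Require Import zify ring lra.
From mathcomp Require Import sesquilinear spectral complex polyrcf boolp.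
Import Order.TTheory GRing.Theory Num.Theory.
Local Open Scope ring_scope.

Module ModL.
Local Open Scope sesquilinear_scope.

Lemma trmxC_mul (C : numClosedFieldType) m n p (X : 'M[C]_(m,n)) (Y : 'M[C]_(n,p)) :
  (X *m Y)^t* = Y^t* *m X^t*.
Proof. by rewrite trmx_mul map_mxM. Qed.

Lemma rayleigh_C (C : numClosedFieldType) n (A : 'M[C]_n) (w : 'rV[C]_n) (c : C) :
  A \is hermsymmx -> c \is Num.real ->
  c * (w *m w^t*) 0 0 < (w *m A *m w^t*) 0 0 ->
  exists2 a, eigenvalue A a & c < a.
Proof.
move=> hA cR hlt.
set P := spectralmx A; set d := spectral_diag A.
have /orthomx_spectralP eqA := hermitian_normalmx hA.
have Pu : P \is unitarymx by exact: spectral_unitarymx.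
have dR := hermitian_spectral_diag_real hA.
rewrite -/P -/d invmx_unitary // in eqA.
set u := w *m P^t*.
have E1 : w *m A *m w^t* = u *m diag_mx d *m u^t*.
  by rewrite {1}eqA /u trmxC_mul trmxCK !mulmxA.
have E2 : w *m w^t* = u *m u^t*.
  by rewrite /u trmxC_mul trmxCK mulmxA mulmxKtV.
rewrite E1 E2 !mxE in hlt.
have [i hi] : exists i, c < d 0 i.
  apply/existsP; apply: contraLR hlt; rewrite negb_exists => /forallP hall.
  apply/negP/negP; rewrite le_gtF // mulr_sumr; apply: ler_sum => k _.
  have dk : d 0 k \is Num.real by exact: (mxOverP dR).
  have := hall k; rewrite real_ltNge // negbK => dkc.
  rewrite mul_mx_diag !mxE mulrAC [c * _]mulrC; apply: ler_wpM2l => //.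
  exact: mul_conjC_ge0.
exists (d 0 i) => //.
apply/eigenvalueP; exists (delta_mx 0 i *m P).
  rewrite eqA !mulmxA mulmxtVK //.
  have -> : delta_mx 0 i *m diag_mx d = d 0 i *: delta_mx 0 i :> 'rV_n.
    apply/rowP => k; rewrite mul_mx_diag !mxE eqxx /=.
    by have [->|_] := eqVneq k i; rewrite ?mulr1 ?mulr0 ?mul1r ?mul0r.
  by rewrite -scalemxAl.
rewrite mulmx_free_eq0 ?row_free_unit ?unitarymx_unit //.
by apply/eqP => /matrixP /(_ 0 i); rewrite !mxE !eqxx => /eqP; rewrite oner_eq0.
Qed.

End ModL.
Import ModL.

Module ModL2.
Local Open Scope sesquilinear_scope.

Lemma rayleigh_R (R : rcfType) n (A : 'M[R]_n) (v : 'rV[R]_n) (c : R) :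
  A^T = A -> c * (v *m v^T) 0 0 < (v *m A *m v^T) 0 0 ->
  exists2 a, eigenvalue A a & c < a.
Proof.
move=> hs hlt.
pose f := real_complex R.
pose Ac := map_mx f A; pose w := map_mx f v.
have hA : Ac \is hermsymmx.
  apply: realsym_hermsym.
    apply/is_hermitianmxP; rewrite expr0 scale1r; apply/matrixP => i j.
    by rewrite !mxE -[in LHS]hs mxE.
  apply/mxOverP => i j; rewrite mxE /f.
  by rewrite complex_real.
have wt : w^t* = map_mx f v^T.
  by apply/matrixP => i j; rewrite !mxE /f; exact: conjc_real.
have [a ha ca] : exists2 a, eigenvalue Ac a & (c%:C)%C < a.
  apply: (@rayleigh_C _ _ Ac w) => //.
    by rewrite complex_real.
  rewrite wt /w /Ac -!map_mxM !mxE -rmorphM /= ltcR.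
  by move: hlt; rewrite !mxE.
move: ca; rewrite ltcE /= => /andP [/eqP Ha ca].
have eqa : a = f (complex.Re a).
  by move: Ha; case: a {ha ca} => x y /= ->.
exists (complex.Re a) => //.
by move: ha; rewrite {1}eqa /Ac eigenvalue_map.
Qed.

End ModL2.
Import ModL2.

Section Q.
Variable R : comRingType.

Lemma sum_delta (n a : nat) (F : nat -> R) : (a < n)%N ->
  \sum_(i < n) ((nat_of_ord i == a)%:R * F i) = F a.
Proof.
move=> ha; rewrite (bigD1 (Ordinal ha)) //= eqxx mul1r big1 ?addr0 // => i.
by rewrite -val_eqE /= => /negbTE ->; rewrite mul0r.
Qed.

Lemma big_pairs (n : nat) (E : seq (nat * nat)) (g : nat -> nat -> R) :
  uniq E -> (forall e, e \in E -> (e.1 < n)%N && (e.2 < n)%N) ->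
  \sum_(i < n) \sum_(j < n) (((nat_of_ord i, nat_of_ord j) \in E)%:R * g i j)
  = \sum_(e <- E) g e.1 e.2.
Proof.
elim: E => [|e E IH] /=.
  by move=> _ _; rewrite big_nil big1 // => i _; rewrite big1 // => j _; rewrite mul0r.
move=> /andP [eE uE] hb.
rewrite big_cons -IH //; last by move=> x hx; apply: hb; rewrite in_cons hx orbT.
have /andP [h1 h2] := hb e (mem_head _ _).
transitivity (\sum_(i < n) \sum_(j < n)
   (((nat_of_ord i == e.1)%:R * ((nat_of_ord j == e.2)%:R * g i j)) +
    ((nat_of_ord i, nat_of_ord j) \in E)%:R * g i j)).
  apply: eq_bigr => i _; apply: eq_bigr => j _.
  rewrite in_cons; case: e eE h1 h2 {hb} => a b /= eE h1 h2.
  have [[-> ->]|ne] := eqVneq (nat_of_ord i, nat_of_ord j) (a, b).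
    by rewrite (negbTE eE) !eqxx /= !mul1r mul0r addr0.
  rewrite /= mulrA -natrM mulnb.
  have -> : ((nat_of_ord i == a) && (nat_of_ord j == b)) = false.
    by apply/negbTE; apply: contra ne => /andP [/eqP -> /eqP ->].
  by rewrite mul0r add0r.
under eq_bigr => i _ do rewrite big_split /=.
rewrite big_split /=; congr (_ + _).
  rewrite -(@sum_delta n e.2 (g e.1) h2) -(@sum_delta n e.1 (fun i => \sum_(j < n) ((nat_of_ord j == e.2)%:R * g i j)) h1).
  apply: eq_bigr => i _; rewrite big_distrr /=; apply: eq_bigr => j _.
  done.
Qed.
End Q.


Lemma quad_adj (R : realType) (n : nat) (E : seq (nat * nat)) (f : nat -> R) :
  uniq E -> (forall e, e \in E -> (e.1 < e.2)%N && (e.2 < n)%N) ->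
  ((\row_(i < n) f i) *m adjmx R n E *m (\row_(i < n) f i)^T) 0 0
  = 2 * \sum_(e <- E) f e.1 * f e.2.
Proof.
move=> uE hE.
have hb : forall e, e \in E -> (e.1 < n)%N && (e.2 < n)%N.
  by move=> e /hE /andP [h1 h2]; rewrite h2 (ltn_trans h1 h2).
have split : forall i j : 'I_n, (((nat_of_ord i, nat_of_ord j) \in E)
   || ((nat_of_ord j, nat_of_ord i) \in E))%:R
   = ((nat_of_ord i, nat_of_ord j) \in E)%:R + ((nat_of_ord j, nat_of_ord i) \in E)%:R :> R.
  move=> i j; case h1: (_ \in E); case h2: (_ \in E); rewrite /= ?addr0 ?add0r //.
  by have := hE _ h1; have := hE _ h2 => /= /andP [l1 _] /andP [l2 _]; move: (ltn_trans l1 l2); rewrite ltnn.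
rewrite mxE.
transitivity (\sum_(i < n) \sum_(j < n)
  (((nat_of_ord i, nat_of_ord j) \in E)%:R * (f i * f j)
   + ((nat_of_ord j, nat_of_ord i) \in E)%:R * (f j * f i))).
  under eq_bigr => j _ do rewrite !mxE big_distrl /=.
  rewrite exchange_big /=; apply: eq_bigr => i _; apply: eq_bigr => j _.
  rewrite !mxE split; ring.
under eq_bigr => i _ do rewrite big_split /=.
rewrite big_split /= (@big_pairs _ n E (fun i j => f i * f j)) //.
rewrite exchange_big /= (@big_pairs _ n E (fun i j => f i * f j)) //.
ring.
Qed.

Lemma snd_pend s o l : map snd (pend s o l) = iota o l.
Proof.
rewrite /pend -map_comp /=.
by rewrite -[o in RHS]addn0 -iotaDl.
Qed.

Lemma lt_pend s o l : (s < o)%N -> all (fun e => e.1 < e.2)%N (pend s o l).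
Proof.
move=> so; apply/allP => e /mapP [k _ ->] /=.
case: eqP => hk /=; lia.
Qed.

Lemma snd_P2s v base r :
  map snd (flatten [seq pend v (base + 2 * k) 2 | k <- iota 0 r]) = iota base (2 * r).
Proof.
elim: r base => [|r IH] base; first by [].
rewrite [iota 0 r.+1]/= map_cons.
rewrite (_ : flatten (pend v (base + 2*0) 2 :: _) = pend v base 2 ++ flatten [seq pend v (base + 2 * k) 2 | k <- iota 1 r]); last by rewrite muln0 addn0.
rewrite map_cat snd_pend.
have -> : iota 1 r = map (addn 1) (iota 0 r) by rewrite -iotaDl.
rewrite -map_comp.
rewrite (@eq_map _ _ _ (fun k => pend v ((base + 2) + 2 * k) 2)); last first.
  by move=> k /=; congr pend; lia.
by rewrite IH -iotaD mulnS.
Qed.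

Lemma lt_P2s v base r : (v < base)%N ->
  all (fun e => e.1 < e.2)%N (flatten [seq pend v (base + 2 * k) 2 | k <- iota 0 r]).
Proof.
move=> vb; apply/allP => e /flatten_mapP [k _ he].
have /allP := @lt_pend v (base + 2 * k) 2 ltac:(lia).
by apply.
Qed.

Lemma iota_cat' a n b m : b = (a + n)%N -> iota a n ++ iota b m = iota a (n + m).
Proof. by move=> ->; rewrite iotaD. Qed.

Lemma edges_ok (E : seq (nat * nat)) n :
  map snd E = iota 1 n.-1 -> all (fun e => e.1 < e.2)%N E ->
  uniq E /\ (forall e, e \in E -> (e.1 < e.2)%N && (e.2 < n)%N).
Proof.
move=> hs /allP ha; split.
  by apply: (@map_uniq _ _ snd); rewrite hs iota_uniq.
move=> e he; rewrite ha //=.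
have : e.2 \in iota 1 n.-1 by rewrite -hs; apply: map_f.
rewrite mem_iota; case: (n) {hs} => [|m] /=; lia.
Qed.

Lemma treeF_ok r1 r2 h q1 q2 :
  let E := treeF_edges r1 r2 h q1 q2 in
  uniq E /\ (forall e, e \in E -> (e.1 < e.2)%N && (e.2 < treeF_order r1 r2 h q1 q2)%N).
Proof.
apply: edges_ok.
  rewrite /treeF_edges !map_cat !snd_pend snd_P2s.
  rewrite snd_P2s /treeF_order.
  have -> : ((1 + h + q1 + q2 + 2 * (r1 + r2)).-1 = h + q1 + 2 * r1 + q2 + 2 * r2)%N by lia.
  rewrite !catA !iota_cat'; try lia.
  congr iota; lia.
rewrite /treeF_edges !all_cat !lt_pend ?lt_P2s //; lia.
Qed.

Lemma starT_ok r2 j :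
  let E := starT_edges r2 j in
  uniq E /\ (forall e, e \in E -> (e.1 < e.2)%N && (e.2 < starT_order r2 j)%N).
Proof.
apply: edges_ok.
  rewrite /starT_edges !map_cat !snd_pend snd_P2s /starT_order.
  have -> : ((1 + 2 * r2 + j).-1 = 2 * r2 + j)%N by lia.
  by rewrite iota_cat'.
rewrite /starT_edges !all_cat !lt_pend ?lt_P2s //; lia.
Qed.

Section Sums.
Variable R : realType.

Lemma sum_pend (F : nat -> nat -> R) s o l :
  \sum_(e <- pend s o l) F e.1 e.2 =
  \sum_(0 <= k < l) F (if k == 0 then s else o + k.-1)%N (o + k)%N.
Proof. by rewrite big_map /index_iota subn0. Qed.

Lemma sum_P2s (F : nat -> nat -> R) v base r :
  \sum_(e <- flatten [seq pend v (base + 2 * k) 2 | k <- iota 0 r]) F e.1 e.2 =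
  \sum_(0 <= k < r) (F v (base + 2 * k)%N + F (base + 2 * k)%N (base + 2 * k + 1)%N).
Proof.
rewrite big_flatten /= big_map /index_iota subn0; apply: eq_bigr => k _.
rewrite sum_pend /index_iota /= !big_cons big_nil /= addr0.
by rewrite addn0 addn1.
Qed.

Lemma sum_pairs_nat (F : nat -> R) base r :
  \sum_(base <= i < base + 2 * r) F i =
  \sum_(0 <= k < r) (F (base + 2 * k)%N + F (base + 2 * k + 1)%N).
Proof.
elim: r => [|r IH]; first by rewrite muln0 addn0 !big_geq.
rewrite big_nat_recr //= -IH.
rewrite (@big_cat_nat _ _ _ (base + 2 * r).+1) /=; try lia.
rewrite (@big_cat_nat _ _ _ (base + 2 * r)) /=; try lia.
rewrite big_nat1 (_ : (base + 2 * r.+1 = (base + 2 * r).+1.+1)%N); last by lia.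
by rewrite big_nat1 addn1 addrA.
Qed.

Lemma sum_prev (g : nat -> R) s o j :
  (forall i, 0 <= g i) ->
  \sum_(0 <= k < j.+1) g (if k == 0 then s else o + k.-1)%N <=
  g s + \sum_(0 <= k < j.+1) g (o + k)%N.
Proof.
move=> g0; rewrite big_nat_recl // eqxx lerD2l /=.
by rewrite [X in _ <= X]big_nat_recr //= lerDl.
Qed.

Lemma sum_shift (F : nat -> R) m j :
  \sum_(m <= i < m + j) F i = \sum_(0 <= k < j) F (m + k)%N.
Proof.
elim: j => [|j IH]; first by rewrite addn0 !big_geq.
rewrite addnS !big_nat_recr //=; last by lia.
by rewrite IH.
Qed.

End Sums.

Section StarT.
Variable R : realType.

Lemma amgm (a x y : R) : 0 < a -> 2 * (x * y) <= a * x ^+ 2 + y ^+ 2 / a.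
Proof.
move=> a0.
have h : 0 <= (a * x - y) ^+ 2 / a by rewrite divr_ge0 ?sqr_ge0 // ltW.
have e : (a * x - y) ^+ 2 / a = a * x ^+ 2 + y ^+ 2 / a - 2 * (x * y).
  by field; rewrite gt_eqF.
by rewrite e subr_ge0 in h.
Qed.

Lemma norm_starT (f : nat -> R) r2 j :
  \sum_(i < starT_order r2 j) f i ^+ 2 =
  f 0%N ^+ 2 + \sum_(0 <= k < r2) (f (1 + 2 * k)%N ^+ 2 + f (1 + 2 * k + 1)%N ^+ 2)
  + \sum_(0 <= k < j) f (1 + 2 * r2 + k)%N ^+ 2.
Proof.
rewrite /starT_order -(big_mkord xpredT (fun i => f i ^+ 2)).
rewrite big_ltn; last by lia.
rewrite (@big_cat_nat _ _ _ (1 + 2 * r2)) /=; try lia.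
rewrite sum_pairs_nat addrA; congr (_ + _).
exact: sum_shift.
Qed.

Lemma edges_starT (F : nat -> nat -> R) r2 j :
  \sum_(e <- starT_edges r2 j) F e.1 e.2 =
  \sum_(0 <= k < r2) (F 0%N (1 + 2 * k)%N + F (1 + 2 * k)%N (1 + 2 * k + 1)%N)
  + \sum_(0 <= k < j) F (if k == 0 then 0 else 1 + 2 * r2 + k.-1)%N (1 + 2 * r2 + k)%N.
Proof. by rewrite /starT_edges big_cat /= sum_P2s sum_pend. Qed.

Lemma quad_starT (f : nat -> R) r2 j (z lam b : R) :
  (0 < j)%N -> 0 < z -> 0 < b -> 0 < lam ->
  r2%:R * b + z = lam -> b^-1 + lam^-1 = lam -> z + z^-1 = lam ->
  2 * \sum_(e <- starT_edges r2 j) f e.1 * f e.2 <=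
  lam * \sum_(i < starT_order r2 j) f i ^+ 2.
Proof.
move=> j0 z0 b0 l0 h1 h2 h3.
rewrite (edges_starT (fun a b => f a * f b)) norm_starT /=.
case: j j0 => // j _.
set P := \sum_(0 <= k < r2) f (1 + 2 * k)%N ^+ 2.
set L := \sum_(0 <= k < r2) f (1 + 2 * k + 1)%N ^+ 2.
set W := \sum_(0 <= k < j.+1) f (1 + 2 * r2 + k)%N ^+ 2.
have hS : 2 * \sum_(0 <= k < r2) (f 0%N * f (1 + 2 * k)%N + f (1 + 2 * k)%N * f (1 + 2 * k + 1)%N)
   <= r2%:R * b * f 0%N ^+ 2 + (b^-1 + lam^-1) * P + lam * L.
  rewrite mulr_sumr.
  apply: le_trans (_ : \sum_(0 <= k < r2) (b * f 0%N ^+ 2 + (b^-1 + lam^-1) * f (1 + 2 * k)%N ^+ 2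
        + lam * f (1 + 2 * k + 1)%N ^+ 2) <= _).
    apply: ler_sum => k _.
    have := @amgm b (f 0%N) (f (1 + 2 * k)%N) b0.
    have := @amgm lam^-1 (f (1 + 2 * k)%N) (f (1 + 2 * k + 1)%N) (ltac:(by rewrite invr_gt0)).
    rewrite invrK; lra.
  rewrite !big_split /= -!mulr_sumr sumr_const_nat subn0 /P /L.
  by rewrite -mulr_natl expr2 -[X in _ <= X]addrA -[X in X <= _]addrA lerD2r le_eqVlt; apply/orP; left; apply/eqP; ring.
have hP : 2 * \sum_(0 <= k < j.+1) (f (if k == 0 then 0 else 1 + 2 * r2 + k.-1)%N * f (1 + 2 * r2 + k)%N)
   <= z * (f 0%N ^+ 2 + W) + z^-1 * W.
  rewrite mulr_sumr.
  apply: le_trans (_ : \sum_(0 <= k < j.+1) (z * f (if k == 0 then 0 else 1 + 2 * r2 + k.-1)%N ^+ 2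
        + z^-1 * f (1 + 2 * r2 + k)%N ^+ 2) <= _).
    apply: ler_sum => k _.
    have := @amgm z (f (if k == 0 then 0 else 1 + 2 * r2 + k.-1)%N) (f (1 + 2 * r2 + k)%N) z0.
    lra.
  rewrite big_split /= -!mulr_sumr /W lerD2r; apply: ler_wpM2l; first exact: ltW.
  exact: (@sum_prev _ (fun i => f i ^+ 2) 0%N (1 + 2 * r2)%N j (fun i => sqr_ge0 _)).
have hf0 : 0 <= f 0%N ^+ 2 by apply: sqr_ge0.
have hW : 0 <= W by apply: sumr_ge0 => k _; apply: sqr_ge0.
have eN : \sum_(0 <= k < r2) (f (1 + 2 * k)%N ^+ 2 + f (1 + 2 * k + 1)%N ^+ 2) = P + L.
  by rewrite big_split.
rewrite eN.
have e1 := congr1 (fun x => x * f 0%N ^+ 2) h1.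
have e2 := congr1 (fun x => x * P) h2.
have e3 := congr1 (fun x => x * W) h3.
simpl in e1, e2, e3.
lra.
Qed.
End StarT.

Section TreeF.
Variable R : realType.
Variables (r1 r2 h q1 q2 : nat).
Hypotheses (hh : (2 <= h)%N) (hq1 : (2 <= q1)%N) (hq2 : (2 <= q2)%N).
Variables (z t s b c : R).

Definition o2 := (1 + h + q1 + 2 * r1)%N.
Definition v2 := (h + q1 + 2 * r1 + q2)%N.

Definition starval (i : nat) : R := if odd (i - v2) then b else c.

Definition gT (i : nat) : R :=
  if i == 0%N then t else if i == 1%N then s else if i == (1 + h)%N then s
  else if ((o2 <= i) && (i < o2 + q2))%N then z ^+ (o2 + q2 - 1 - i)
  else if (o2 + q2 <= i)%N then starval i else 0.

Ltac gsolve := rewrite /gT /o2 /v2; repeat (case: ifP => ?; try (exfalso; lia)).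

Lemma gT0 : gT 0 = t. Proof. by []. Qed.
Lemma gT1 : gT 1 = s. Proof. by gsolve. Qed.
Lemma gTh : gT (1 + h) = s. Proof. by gsolve. Qed.
Lemma gTz i : i != 0%N -> i != 1%N -> i != (1 + h)%N -> (i < o2)%N -> gT i = 0.
Proof. rewrite /o2 => *; by gsolve. Qed.
Lemma gTp i : (o2 <= i < o2 + q2)%N -> gT i = z ^+ (o2 + q2 - 1 - i).
Proof. rewrite /o2 => *; by gsolve. Qed.
Lemma gTb i k : i = (1 + v2 + 2 * k)%N -> gT i = b.
Proof.
rewrite /v2 => ->; gsolve.
by rewrite /starval /v2 (_ : (_ - _ = (2 * k).+1)%N); [rewrite /= oddM | lia].
Qed.
Lemma gTc i k : i = (1 + v2 + 2 * k + 1)%N -> gT i = c.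
Proof.
rewrite /v2 => ->; gsolve.
by rewrite /starval /v2 (_ : (_ - _ = (2 * k).+2)%N); [rewrite /= negbK oddM | lia].
Qed.

Lemma sum_zero (F : nat -> R) m n :
  (forall i, (m <= i < n)%N -> F i = 0) -> \sum_(m <= i < n) F i = 0.
Proof. by move=> H; rewrite big_nat_cond big1 // => i /andP [hi _]; apply: H. Qed.

Lemma norm_T :
  \sum_(i < treeF_order r1 r2 h q1 q2) gT i ^+ 2 =
  t ^+ 2 + s ^+ 2 + s ^+ 2 + \sum_(0 <= k < q2) (z ^+ (q2 - 1 - k)) ^+ 2
  + r2%:R * (b ^+ 2 + c ^+ 2).
Proof.
rewrite /treeF_order -(big_mkord xpredT (fun i => gT i ^+ 2)).
rewrite big_ltn; last lia.
rewrite big_ltn; last lia.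
rewrite gT0 gT1 (@big_cat_nat _ _ _ (1 + h)) /=; try lia.
rewrite (@sum_zero _ 2 (1 + h)); last first.
  by move=> i hi; rewrite gTz ?expr0n //; rewrite /o2; lia.
rewrite big_ltn; last lia.
rewrite gTh (@big_cat_nat _ _ _ o2) /=; try (rewrite /o2; lia).
rewrite (@sum_zero _ (1 + h).+1 o2); last first.
  by move=> i hi; rewrite gTz ?expr0n //; rewrite /o2 in hi *; lia.
rewrite (@big_cat_nat _ _ _ (o2 + q2)) /=; try (rewrite /o2; lia).
rewrite sum_shift.
rewrite (_ : (1 + h + q1 + q2 + 2 * (r1 + r2) = o2 + q2 + 2 * r2)%N); last by rewrite /o2; lia.
rewrite sum_pairs_nat.
have ep : \sum_(0 <= k < q2) gT (o2 + k) ^+ 2 = \sum_(0 <= k < q2) (z ^+ (q2 - 1 - k)) ^+ 2.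
  apply: eq_big_nat => k hk; rewrite gTp; [congr (_ ^+ _ ^+ _) | ]; lia.
have es : \sum_(0 <= k < r2) (gT (o2 + q2 + 2 * k) ^+ 2 + gT (o2 + q2 + 2 * k + 1) ^+ 2)
   = \sum_(0 <= k < r2) (b ^+ 2 + c ^+ 2).
  apply: eq_big_nat => k hk; rewrite (@gTb _ k) ?(@gTc _ k) //; rewrite /o2 /v2; lia.
rewrite ep es.
rewrite sumr_const_nat subn0.
rewrite -mulr_natl !add0r; ring.
Qed.

Lemma edges_T : t = z ^+ q2 ->
  \sum_(e <- treeF_edges r1 r2 h q1 q2) gT e.1 * gT e.2 =
  t * s + t * s + \sum_(0 <= k < q2) z ^+ (q2 - k) * z ^+ (q2 - 1 - k)
  + r2%:R * (b + b * c).
Proof.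
move=> ht.
rewrite /treeF_edges !big_cat /=.
rewrite !(@sum_pend _ (fun a b => gT a * gT b)) !(@sum_P2s _ (fun a b => gT a * gT b)).
have ea : \sum_(0 <= k < h) gT (if k == 0%N then 0%N else (1 + k.-1)%N) * gT (1 + k) = t * s.
  rewrite big_ltn; last lia.
  rewrite sum_zero ?addr0 ?gT0 ?addn0 ?gT1 //.
  move=> i hi; rewrite (@gTz (1 + i)) ?mulr0 //; rewrite /o2; lia.
have eb : \sum_(0 <= k < q1) gT (if k == 0%N then 0%N else (1 + h + k.-1)%N) * gT (1 + h + k) = t * s.
  rewrite big_ltn; last lia.
  rewrite sum_zero ?addr0 ?gT0 ?addn0 ?gTh //.
  move=> i hi; rewrite (@gTz (1 + h + i)) ?mulr0 //; rewrite /o2; lia.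
have ec : \sum_(0 <= k < r1) (gT (h + q1) * gT (1 + h + q1 + 2 * k) +
        gT (1 + h + q1 + 2 * k) * gT (1 + h + q1 + 2 * k + 1)) = 0.
  apply: sum_zero => i hi; rewrite (@gTz (1 + h + q1 + 2 * i)) ?mulr0 ?mul0r ?addr0 //; rewrite /o2; lia.
have ed : \sum_(0 <= k < q2)
        gT (if k == 0%N then 0%N else (1 + h + q1 + 2 * r1 + k.-1)%N) *
        gT (1 + h + q1 + 2 * r1 + k) = \sum_(0 <= k < q2) z ^+ (q2 - k) * z ^+ (q2 - 1 - k).
  apply: eq_big_nat => k hk.
  rewrite (@gTp (1 + h + q1 + 2 * r1 + k)); last by rewrite /o2; lia.
  rewrite /o2 (_ : (1 + h + q1 + 2 * r1 + q2 - 1 - (1 + h + q1 + 2 * r1 + k) = q2 - 1 - k)%N); last lia.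
  case: eqP => [->|hk0]; first by rewrite gT0 ht !subn0.
  rewrite gTp; last by rewrite /o2; lia.
  congr (_ ^+ _ * _); rewrite /o2; lia.
have ee : \sum_(0 <= k < r2)
        (gT (h + q1 + 2 * r1 + q2) * gT (1 + (h + q1 + 2 * r1 + q2) + 2 * k) +
         gT (1 + (h + q1 + 2 * r1 + q2) + 2 * k) *
         gT (1 + (h + q1 + 2 * r1 + q2) + 2 * k + 1)) = r2%:R * (b + b * c).
  transitivity (\sum_(0 <= k < r2) (b + b * c)); last by rewrite sumr_const_nat subn0 mulr_natl.
  apply: eq_big_nat => k hk.
  rewrite (@gTb (1 + (h + q1 + 2 * r1 + q2) + 2 * k) k); last by rewrite /v2.
  rewrite (@gTc (1 + (h + q1 + 2 * r1 + q2) + 2 * k + 1) k); last by rewrite /v2.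
  rewrite (@gTp (h + q1 + 2 * r1 + q2)); last by rewrite /o2; lia.
  by rewrite /o2 (_ : (_ - _ = 0)%N) ?expr0 ?mul1r //; lia.
rewrite ea eb ec ed ee add0r; ring.
Qed.

End TreeF.

Lemma path_id0 (R : realType) (z : R) q : z != 0 ->
  2 * \sum_(0 <= i < q) z ^+ i.+1 * z ^+ i
  - (z + z^-1) * (\sum_(0 <= i < q) (z ^+ i) ^+ 2 + (z ^+ q) ^+ 2)
  = - z^-1 - (z ^+ q) ^+ 2 * z.
Proof.
move=> z0; elim: q => [|q IH].
  by rewrite !big_geq // expr0; field.
rewrite !big_nat_recr //=.
set A := \sum_(0 <= i < q) _.
set B := \sum_(0 <= i < q) _.
set X := z ^+ q.
rewrite -/A -/B -/X in IH.
have hA : A = ((z + z^-1) * (B + X ^+ 2) - z^-1 - X ^+ 2 * z) / 2.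
  have h2A : 2 * A = (z + z^-1) * (B + X ^+ 2) - z^-1 - X ^+ 2 * z by lra.
  have e : A = (2 * A) / 2 by field.
  by rewrite e h2A.
by rewrite hA [z ^+ q.+1]exprS -/X; field.
Qed.

Lemma path_id (R : realType) (z : R) q : z != 0 ->
  2 * \sum_(0 <= k < q) z ^+ (q - k) * z ^+ (q - 1 - k)
  - (z + z^-1) * (\sum_(0 <= k < q) (z ^+ (q - 1 - k)) ^+ 2 + (z ^+ q) ^+ 2)
  = - z^-1 - (z ^+ q) ^+ 2 * z.
Proof.
move=> z0; rewrite -(@path_id0 _ z q z0).
rewrite [\sum_(0 <= k < q) z ^+ (q - k) * _]big_nat_rev [\sum_(0 <= k < q) (z ^+ (q - 1 - k)) ^+ 2]big_nat_rev /=.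
congr (2 * _ - _ * (_ + _)); apply: eq_big_nat => i hi; congr (_ ^+ _ * _ ^+ _) || congr (_ ^+ _ ^+ _); lia.
Qed.

Lemma exists_z (R : realType) (a : R) : 1 <= a ->
  exists z : R, [/\ 0 < z, z < 1 & a * (z ^+ 4 + z ^+ 2) = 1].
Proof.
move=> a1.
have a0 : 0 < a by lra.
set S := Num.sqrt (1 + 4 / a).
have hS2 : S ^+ 2 = 1 + 4 / a by rewrite sqr_sqrtr // addr_ge0 // divr_ge0 // ltW.
have hS0 : 0 <= S by apply: sqrtr_ge0.
have h4a : 0 < 4 / a by rewrite divr_gt0.
have h4a' : 4 / a <= 4 by rewrite ler_pdivrMr // ler_peMr //; lra.
have S1 : 1 < S by nra.
have S3 : S < 3 by nra.
set w := (S - 1) / 2.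
have w0 : 0 < w by rewrite /w divr_gt0 //; lra.
have w1 : w < 1 by rewrite /w ltr_pdivrMr //; lra.
exists (Num.sqrt w).
have hz2 : Num.sqrt w ^+ 2 = w by rewrite sqr_sqrtr // ltW.
split.
- by rewrite sqrtr_gt0.
- rewrite -(@ltr_pXn2r _ 2) ?nnegrE ?sqrtr_ge0 // hz2 expr1n //.
- rewrite (_ : 4%N = (2 * 2)%N) // exprM hz2 /w.
  have -> : ((S - 1) / 2) ^+ 2 + (S - 1) / 2 = (S ^+ 2 - 1) / 4 by field.
  rewrite hS2; field; lra.
Qed.

Lemma quad_T (R : realType) r1 r2 h q1 q2 :
  (2 <= h)%N -> (2 <= q1)%N -> (2 <= q2)%N ->
  forall z lam b c t s : R,
  0 < z -> z < 1 -> lam = z + z^-1 -> lam * b = 1 + c -> lam * c = b ->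
  r2%:R * b * z = 1 -> t = z ^+ q2 -> lam * s = t ->
  lam * \sum_(i < treeF_order r1 r2 h q1 q2) gT R r1 h q1 q2 z t s b c i ^+ 2
  < 2 * \sum_(e <- treeF_edges r1 r2 h q1 q2)
          gT R r1 h q1 q2 z t s b c e.1 * gT R r1 h q1 q2 z t s b c e.2.
Proof.
move=> hh hq1 hq2 z lam b c t s z0 z1 hl hlb hlc hb ht hs.
rewrite (@norm_T R r1 r2 h q1 q2 hh hq1 hq2) (@edges_T R r1 r2 h q1 q2 hh hq1 hq2 z t s b c ht).
have zn0 : z != 0 by rewrite gt_eqF.
have hP := @path_id R z q2 zn0.
rewrite -hl -ht in hP.
set N := \sum_(0 <= k < q2) _ in hP *.
set Z := \sum_(0 <= k < q2) _ in hP *.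
have S1 : lam * (b ^+ 2 + c ^+ 2) = b * (lam * b) + c * (lam * c) by ring.
rewrite hlb hlc in S1.
have S2 : lam * (r2%:R * (b ^+ 2 + c ^+ 2)) = r2%:R * (b * (1 + c) + c * b).
  by rewrite -S1; ring.
have U : lam * s ^+ 2 = t * s by rewrite -hs; ring.
have hzi : r2%:R * b = z^-1.
  by apply: (@mulIf _ z) => //; rewrite hb mulVf.
have t0 : 0 < t by rewrite ht exprn_gt0.
have l0 : 0 < lam by rewrite hl addr_gt0 // invr_gt0.
have s0 : 0 < s.
  by have := t0; rewrite -hs pmulr_rgt0.
have lz : lam * z = z ^+ 2 + 1 by rewrite hl; field.
have pos : 0 < 2 * t * s - t ^+ 2 * z.
  have -> : 2 * t * s - t ^+ 2 * z = lam * s ^+ 2 * (1 - z ^+ 2).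
    by rewrite -hs; rewrite (_ : (lam * s) ^+ 2 * z = (lam * z) * lam * s ^+ 2); [rewrite lz; ring | ring].
  by rewrite !mulr_gt0 ?exprn_gt0 // subr_gt0 expr2; nra.
have B : lam * (r2%:R * (b ^+ 2 + c ^+ 2)) + 2 * z^-1 = 2 * (r2%:R * (b + b * c)) + z^-1.
  rewrite S2 -hzi; ring.
lra.
Qed.

Lemma adjmx_sym (R : realType) n E : (adjmx R n E)^T = adjmx R n E.
Proof. by apply/matrixP => i j; rewrite !mxE orbC. Qed.

Lemma eig_ub (R : realType) n (A : 'M[R]_n) : has_ubound [set x | eigenvalue A x].
Proof.
have pn0 : char_poly A != 0 by apply: monic_neq0; apply: char_poly_monic.
exists (cauchy_bound (char_poly A)) => x /=.
rewrite eigenvalue_root_char => /(root_in_cauchy_bound pn0).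
by rewrite in_itv /= => /andP [_ /ltW].
Qed.

Lemma row_fun (R : realType) n (v : 'rV[R]_n) :
  v = \row_(i < n) (fun k => oapp (fun i : 'I_n => v 0 i) 0 (insub k)) i.
Proof. by apply/rowP => i; rewrite mxE valK. Qed.

Lemma norm_row (R : realType) n (f : nat -> R) :
  ((\row_(i < n) f i) *m (\row_(i < n) f i)^T) 0 0 = \sum_(i < n) f i ^+ 2.
Proof. by rewrite !mxE; apply: eq_bigr => i _; rewrite !mxE expr2. Qed.

Lemma eig_le (R : realType) n (E : seq (nat * nat)) (lam : R) :
  uniq E -> (forall e, e \in E -> (e.1 < e.2)%N && (e.2 < n)%N) ->
  (forall f : nat -> R, 2 * \sum_(e <- E) f e.1 * f e.2 <= lam * \sum_(i < n) f i ^+ 2) ->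
  forall a, eigenvalue (adjmx R n E) a -> a <= lam.
Proof.
move=> uE bE H a /eigenvalueP [v hv vn0].
set f := fun k => oapp (fun i : 'I_n => v 0 i) 0 (insub k).
have vf : v = \row_(i < n) f i by exact: row_fun.
have Q := @quad_adj R n E f uE bE.
have HN := @norm_row R n f.
rewrite -vf in Q HN.
have eig : (v *m adjmx R n E *m v^T) 0 0 = a * (v *m v^T) 0 0.
  by rewrite hv -scalemxAl mxE.
have Npos : 0 < \sum_(i < n) f i ^+ 2.
  rewrite lt_neqAle sumr_ge0 ?andbT; last by move=> i _; apply: sqr_ge0.
  apply: contra vn0; rewrite eq_sym => /eqP /psumr_eq0P H0.
  apply/eqP/rowP => i; have := H0 (fun k _ => sqr_ge0 _) i isT.
  by rewrite /f valK mxE => /eqP; rewrite sqrf_eq0 => /eqP.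
have := H f; rewrite -Q eig HN.
by rewrite ler_pM2r.
Qed.

Theorem theorem2p1 (R : realType) (r1 r2 h q1 q2 j : nat) :
  (2 <= r1)%N -> (r1 < r2)%N ->
  (2 <= h)%N -> (2 <= q1)%N -> (2 <= q2)%N -> (3 <= j)%N ->
  spectral_radius (adjmx R (starT_order r2 j) (starT_edges r2 j))
  < spectral_radius (adjmx R (treeF_order r1 r2 h q1 q2) (treeF_edges r1 r2 h q1 q2)).
Proof.
move=> hr1 hr12 hh hq1 hq2 hj.
have a1 : 1 <= (r2%:R - 1 : R).
  have : (2%:R <= r2%:R :> R) by rewrite ler_nat; lia.
  lra.
have [z [z0 z1 hz]] := @exists_z R _ a1.
set lam := z + z^-1.
have zn0 : z != 0 by rewrite gt_eqF.
have l0 : 0 < lam by rewrite /lam addr_gt0 // invr_gt0.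
have r0 : 0 < r2%:R :> R by rewrite ltr0n; lia.
set b := (r2%:R * z)^-1.
have b0 : 0 < b by rewrite /b invr_gt0 mulr_gt0.
set c := b / lam.
have h1 : r2%:R * b + z = lam by rewrite /b /lam; field; rewrite ?gt_eqF.
have h2 : b^-1 + lam^-1 = lam.
  rewrite /b invrK; apply/eqP; rewrite -subr_eq0.
  have z2 : z ^+ 2 + 1 != 0 by rewrite gt_eqF // addr_gt0 // exprn_gt0.
  have -> : r2%:R * z + lam^-1 - lam = ((r2%:R - 1) * (z ^+ 4 + z ^+ 2) - 1) / (z * (z ^+ 2 + 1)).
    rewrite /lam; field.
    by rewrite z2 zn0.
  by rewrite hz subrr mul0r.
have h3 : z + z^-1 = lam by [].
have hlb : lam * b = 1 + c.
  by rewrite -{1}h2 mulrDl mulVf ?gt_eqF // mulrC.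
have hlc : lam * c = b by rewrite /c mulrC divfK // gt_eqF.
have hb : r2%:R * b * z = 1 by rewrite /b; field; rewrite ?gt_eqF.
set t := z ^+ q2.
set s := t / lam.
have hs : lam * s = t by rewrite /s mulrC divfK // gt_eqF.
have [uEj bEj] := starT_ok r2 j.
have ubj := @eig_le R _ _ lam uEj bEj
   (fun f => @quad_starT R f r2 j z lam b ltac:(lia) z0 b0 l0 h1 h2 h3).
have supj : spectral_radius (adjmx R (starT_order r2 j) (starT_edges r2 j)) <= lam.
  rewrite /spectral_radius.
  have [[x hx]|ne] := pselect (exists x, eigenvalue (adjmx R (starT_order r2 j) (starT_edges r2 j)) x).
    by apply: ge_sup; [exists x | move=> y /= hy; apply: ubj].
  rewrite sup_out; first exact: ltW.
  by move=> [[x hx] _]; apply: ne; exists x.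
have [uE bE] := treeF_ok r1 r2 h q1 q2.
pose g := gT R r1 h q1 q2 z t s b c.
have Q := @quad_adj R _ _ g uE bE.
have HN := @norm_row R (treeF_order r1 r2 h q1 q2) g.
have QT := @quad_T R r1 r2 h q1 q2 hh hq1 hq2 z lam b c t s z0 z1 erefl hlb hlc hb erefl hs.
have hlt : lam * ((\row_(i < treeF_order r1 r2 h q1 q2) g i) *m (\row_(i < treeF_order r1 r2 h q1 q2) g i)^T) 0 0 <
   ((\row_i g i) *m adjmx R (treeF_order r1 r2 h q1 q2) (treeF_edges r1 r2 h q1 q2) *m (\row_i g i)^T) 0 0.
  by rewrite Q HN; exact: QT.
have [a ha la] := @rayleigh_R R _ _ _ lam (adjmx_sym _ _ _) hlt.
apply: (le_lt_trans supj); apply: (lt_le_trans la).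
rewrite /spectral_radius.
have := ub_le_sup (@eig_ub R _ (adjmx R (treeF_order r1 r2 h q1 q2) (treeF_edges r1 r2 h q1 q2))).
by apply.
Qed.
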